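(* Let $a,b,q$ be complex numbers with $q\ne 0$. Let $A=(A_{n,k})_{n,k\ge0}$ be the infinite lower-triangular matrix with entries $$A_{n,k}=[z^{n-k}]\Big\{\frac{(az;q)_k}{(bz;q)_k}\Big\}\quad(n\ge k),\qquad A_{n,k}=0\ (n<k),$$ and let $A^{-1}=(B_{n,k}(a,b))$ be its inverse. Then for all integers $n\ge k\ge0$, $$B_{n,k}(a,b)=[z^{n-k}]\Big\{\frac{(bz;q)_{n-1}}{(az;q)_n}\Big\}-a\sum_{i=k}^{n-1}B_{n-i,1}(a,b)\,q^{(n-i)i}\,[z^{i-k}]\Big\{\frac{(bz;q)_i}{(az;q)_{i+1}}\Big\}.$$
   Context: For any integer $n$, $(x;q)_n=\prod_{j\ge0}(1-xq^j)/\prod_{j\ge0}(1-xq^{n+j})$, so $(x;q)_0=1$, $(x;q)_n=\prod_{j=0}^{n-1}(1-xq^j)$ for $n\ge1$, $(x;q)_{-1}=1/(1-x/q)$; quotients of these are regarded as formal power series in $z$, and $[z^m]\{f\}$ is the coefficient of $z^m$ in $f$. Two lower-triangular matrices $A,B$ are inverse if $\sum_{i=k}^nA_{n,i}B_{i,k}=\sum_{i=k}^nB_{n,i}A_{i,k}=\delta_{n,k}$ for all $n,k\ge0$. Equivalently, $z^k=\sum_{n\ge k}B_{n,k}(a,b)z^n(az;q)_n/(bz;q)_n$ for all $k\ge0$. Empty sums are $0$. *)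

(* Defs.v *)
From HB Require Import structures.
From mathcomp Require Import all_boot all_order all_algebra.
From mathcomp Require Import reals complex.
Set Implicit Arguments. Unset Strict Implicit. Unset Printing Implicit Defensive.
Import Order.TTheory GRing.Theory Num.Theory.
Local Open Scope ring_scope.

(* Formal power series coefficients of quotients of polynomials in z.
   A "rational series" is a pair (N, D) of polynomials in z standing for N/D,
   with D having nonzero constant term. *)
Section FPS.
Variable C : fieldType.

(* coefficients 0..m of the formal inverse 1/D (requires D`_0 != 0) *)
Fixpoint inv_seq (D : {poly C}) (m : nat) : seq C :=
  match m with
  | 0 => [:: (D`_0)^-1]
  | m'.+1 => let s := inv_seq D m' in
      rcons s (- (D`_0)^-1 * \sum_(1 <= i < m'.+2) D`_i * nth 0 s (m'.+1 - i))
  end.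

Definition fps_inv (D : {poly C}) (m : nat) : C := nth 0 (inv_seq D m) m.

Definition coefz (ND : {poly C} * {poly C}) (m : nat) : C :=
  \sum_(i < m.+1) ND.1`_i * fps_inv ND.2 (m - i).

(* (x z; q)_n for integer n, as a pair (numerator, denominator) of
   polynomials in z:
   n = k >= 0 : prod_{j<k} (1 - x q^j z) / 1
   n = -(k+1) : 1 / prod_{j=1}^{k+1} (1 - x q^{-j} z) *)
Definition qpoch (x q : C) (n : int) : {poly C} * {poly C} :=
  match n with
  | Posz k => (\prod_(j < k) (1 - (x * q ^+ j) *: 'X), 1)
  | Negz k => (1, \prod_(j < k.+1) (1 - (x * q ^- j.+1) *: 'X))
  end.

Definition rdiv (P Q : {poly C} * {poly C}) : {poly C} * {poly C} :=
  (P.1 * Q.2, P.2 * Q.1).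

Definition Amat (a b q : C) (n k : nat) : C :=
  if (k <= n)%N then coefz (rdiv (qpoch a q k) (qpoch b q k)) (n - k) else 0.

Definition lower_tri_inverse (A B : nat -> nat -> C) : Prop :=
  (forall n k, (n < k)%N -> B n k = 0) /\
  (forall n k, (k <= n)%N ->
     \sum_(k <= i < n.+1) A n i * B i k = (n == k)%:R /\
     \sum_(k <= i < n.+1) B n i * A i k = (n == k)%:R).
End FPS.

(* Main.v *)
Require Import Defs.
From HB Require Import structures.
From mathcomp Require Import all_boot all_order all_algebra.
From mathcomp Require Import reals complex.
From mathcomp Require Import ring zify.
Unset Strict Implicit. Unset Printing Implicit Defensive.
Import Order.TTheory GRing.Theory Num.Theory.
Local Open Scope ring_scope.

Section QB.
Variable R : comNzRingType.
Variable x : R.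

Fixpoint qb (n k : nat) : R :=
  match n with
  | 0 => (k == 0)%:R
  | n'.+1 => match k with 0 => 1 | k'.+1 => qb n' k + x ^+ (n' - k') * qb n' k' end
  end.

Lemma qb_n0 n : qb n 0 = 1. Proof. by case: n. Qed.

Lemma qb_small n k : (n < k)%N -> qb n k = 0.
Proof.
elim: n k => [|n IH] [|k] //= hk.
by rewrite !IH ?mulr0 ?addr0 // ltnW.
Qed.

Lemma qb_nn n : qb n n = 1.
Proof. by elim: n => [|n IH] //=; rewrite qb_small // subnn expr0 mul1r IH add0r. Qed.

Definition qi m := \sum_(j < m) x ^+ j.
Definition qf n := \prod_(i < n) qi i.+1.

Lemma qi_add m l : qi (m + l) = qi m + x ^+ m * qi l.
Proof.
rewrite /qi big_split_ord /=; congr (_ + _).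
by rewrite mulr_sumr; apply: eq_bigr => i _; rewrite exprD.
Qed.

Lemma qfS n : qf n.+1 = qf n * qi n.+1.
Proof. by rewrite /qf big_ord_recr. Qed.

Lemma qb_fact n k d : (k + d)%N = n -> qb n k * qf k * qf d = qf n.
Proof.
elim: n k d => [|n IH] k d.
  move=> h0.
  by case: k h0 => [|k] //; case: d => [|d] // _; rewrite /= /qf !big_ord0 !mul1r.
case: k => [|k] hkd.
  by rewrite qb_n0 add0n in hkd *; rewrite hkd /qf big_ord0 !mul1r.
have hn : (k + d)%N = n by move: hkd; rewrite addSn => -[].
rewrite /=; case: d hn {hkd} => [|d] hn.
  rewrite addn0 in hn; subst k.
  by rewrite qb_small // subnn expr0 mul1r add0r qb_nn /qf big_ord0 mulr1 mul1r.
have h1 : qb n k.+1 * qf k.+1 * qf d = qf n by apply: IH; rewrite addSn -addnS.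
have h2 := IH k d.+1 hn.
have -> : (n - k)%N = d.+1 by rewrite -hn addKn.
rewrite !qfS; rewrite qfS in h1; rewrite qfS in h2.
have -> : qi n.+1 = qi d.+1 + x ^+ d.+1 * qi k.+1.
  by rewrite -qi_add; congr qi; lia.
transitivity (qb n k.+1 * (qf k * qi k.+1) * qf d * qi d.+1 +
   x ^+ d.+1 * (qb n k * qf k * (qf d * qi d.+1)) * qi k.+1).
  ring.
rewrite h1 h2; ring.
Qed.
End QB.
Arguments qb {R}. Arguments qi {R}. Arguments qf {R}. Arguments qb_fact {R}.
Arguments qb_small {R}. Arguments qb_n0 {R}. Arguments qb_nn {R}.

Section QF.
Variable F : fieldType.
Local Notation PX := ('X : {poly F}).

Lemma qi_neq0 m : qi PX m.+1 != 0.
Proof.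
apply/eqP => /(congr1 (fun p : {poly F} => p`_0)).
rewrite /qi coef_sum big_ord_recl coefXn eqxx big1 ?addr0 ?coef0.
  by move/eqP; rewrite oner_eq0.
by move=> i _; rewrite coefXn. 
Qed.

Lemma qf_neq0 n : qf PX n != 0.
Proof. by apply/prodf_neq0 => i _; apply: qi_neq0. Qed.

Lemma qb_tri_poly x y :
  qb PX (x + y) x * qb PX (x + y + y).+1 y.+1 =
  qb PX (x + y).+1 x * qb PX (x + y + y).+1 y.
Proof.
apply: (mulIf (qf_neq0 x)); apply: (mulIf (qf_neq0 y)); apply: (mulIf (qf_neq0 y.+1)).
have h1 := qb_fact PX (x + y) x y erefl.
have h2 : qb PX (x + y + y).+1 y.+1 * qf PX y.+1 * qf PX (x + y) = qf PX (x + y + y).+1.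
  by apply: qb_fact; lia.
have h3 : qb PX (x + y).+1 x * qf PX x * qf PX y.+1 = qf PX (x + y).+1.
  by apply: qb_fact; lia.
have h4 : qb PX (x + y + y).+1 y * qf PX y * qf PX (x + y).+1 = qf PX (x + y + y).+1.
  by apply: qb_fact; lia.
transitivity (qb PX (x + y + y).+1 y.+1 * qf PX y.+1 * (qb PX (x + y) x * qf PX x * qf PX y)).
  ring.
rewrite h1 h2 -h4 -h3; ring.
Qed.

Lemma qb_horner (q : F) n k : (qb PX n k).[q] = qb q n k.
Proof.
elim: n k => [|n IH] [|k] /=; rewrite ?hornerE //.
by rewrite !IH.
Qed.

Lemma qb_tri (q : F) x y :
  qb q (x + y) x * qb q (x + y + y).+1 y.+1 =
  qb q (x + y).+1 x * qb q (x + y + y).+1 y.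
Proof.
have := congr1 (fun p : {poly F} => p.[q]) (qb_tri_poly x y).
cbv beta; by rewrite !hornerM !qb_horner.
Qed.
End QF.

Section Ser.
Variable F : fieldType.
Implicit Types (p r D N H : {poly F}).

Lemma size_inv_seq D m : size (inv_seq D m) = m.+1.
Proof. by elim: m => [|m IH] //=; rewrite size_rcons IH. Qed.

Lemma nth_inv_seq D m j : (j <= m)%N -> nth 0 (inv_seq D m) j = fps_inv D j.
Proof.
elim: m => [|m IH]; first by rewrite leqn0 => /eqP ->.
rewrite leq_eqVlt => /orP [/eqP -> //| ltjm].
by rewrite /= nth_rcons size_inv_seq ltjm IH.
Qed.

Lemma fps_invS D m : fps_inv D m.+1 =
  - (D`_0)^-1 * \sum_(1 <= i < m.+2) D`_i * fps_inv D (m.+1 - i).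
Proof.
rewrite /fps_inv /= nth_rcons size_inv_seq ltnn eqxx; congr (_ * _).
rewrite !big_nat; apply: eq_bigr => i /andP [i1 _]; rewrite nth_inv_seq //.
by rewrite leq_subLR -addn1 addnC leq_add2r.
Qed.

Lemma fps_inv_spec D n : D`_0 != 0 ->
  \sum_(i < n.+1) D`_i * fps_inv D (n - i) = (n == 0)%:R.
Proof.
move=> D0; case: n => [|m]; first by rewrite big_ord1 /fps_inv /= mulfV.
rewrite big_ord_recl /= subn0 fps_invS mulrA mulrN mulfV // mulN1r.
rewrite big_add1 /= big_mkord addrC; apply/eqP; rewrite subr_eq0; apply/eqP.
by apply: eq_bigr => i _; rewrite /bump /= add1n.
Qed.

Definition eqm (M : nat) p r := forall m, (m < M)%N -> p`_m = r`_m.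

Lemma eqm_refl M p : eqm M p p. Proof. by []. Qed.
Lemma eqm_sym M p r : eqm M p r -> eqm M r p.
Proof. by move=> h m hm; rewrite h. Qed.
Lemma eqm_trans M p r s : eqm M p r -> eqm M r s -> eqm M p s.
Proof. by move=> h1 h2 m hm; rewrite h1 ?h2. Qed.
Lemma eqm_mul M p p' r r' : eqm M p p' -> eqm M r r' -> eqm M (p * r) (p' * r').
Proof.
move=> h1 h2 m hm; rewrite !coefM; apply: eq_bigr => i _.
have him : (i <= m)%N by rewrite -ltnS.
rewrite h1 ?h2 //; first by apply: leq_ltn_trans (leq_subr _ _) hm.
exact: leq_ltn_trans him hm.
Qed.

Definition Dinv M D := \poly_(i < M) fps_inv D i.

Lemma Dinv_spec M D : D`_0 != 0 -> eqm M (D * Dinv M D) 1.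
Proof.
move=> D0 m hm; rewrite coefM coef1 -(fps_inv_spec D m D0).
apply: eq_bigr => i _; rewrite coef_poly.
by rewrite (leq_ltn_trans (leq_subr _ _) hm).
Qed.

Lemma inv_unique M D H H' : eqm M (D * H) 1 -> eqm M (D * H') 1 -> eqm M H H'.
Proof.
move=> h1 h2.
apply: (@eqm_trans _ _ (H * (D * H'))).
  rewrite -{1}[H]mulr1; apply: eqm_mul => //; exact: eqm_sym.
rewrite mulrA [H * D]mulrC -[H' in eqm _ _ H']mul1r; apply: eqm_mul => //.
Qed.

Lemma coefz_Dinv M N D e : (e < M)%N -> coefz (N, D) e = (N * Dinv M D)`_e.
Proof.
move=> he; rewrite /coefz coefM; apply: eq_bigr => i _ /=.
by rewrite coef_poly (leq_ltn_trans (leq_subr _ _) he).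
Qed.

Lemma coefz_inv M N D H e : (e < M)%N -> D`_0 != 0 -> eqm M (D * H) 1 ->
  coefz (N, D) e = (N * H)`_e.
Proof.
move=> he D0 h; rewrite (coefz_Dinv M N D e he).
exact: (eqm_mul M N N _ _ (eqm_refl M N) (inv_unique M D _ _ (Dinv_spec M D D0) h) e he).
Qed.

Lemma eqm_mul1 M X Y : eqm M X 1 -> eqm M (Y * X) Y.
Proof.
move=> h m hm; rewrite -[in RHS](mulr1 Y).
exact: (eqm_mul M Y Y X 1 (eqm_refl M Y) h m hm).
Qed.

Lemma coefz_ratio N1 D1 N2 D2 e : D1`_0 != 0 -> D2`_0 != 0 ->
  N1 * D2 = N2 * D1 -> coefz (N1, D1) e = coefz (N2, D2) e.
Proof.
move=> h1 h2 hr; set M := e.+1.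
rewrite !(coefz_Dinv M) //.
set H1 := Dinv M D1; set H2 := Dinv M D2.
have a1 := eqm_mul1 M _ (N1 * H1) (Dinv_spec M D2 h2).
have a2 := eqm_mul1 M _ (N2 * H2) (Dinv_spec M D1 h1).
have eq : N1 * H1 * (D2 * H2) = N2 * H2 * (D1 * H1).
  by rewrite mulrACA hr [H1 * H2]mulrC mulrACA.
by rewrite -a1 // eq a2.
Qed.

Lemma coefz_mul N1 D1 N2 D2 e : D1`_0 != 0 -> D2`_0 != 0 ->
  \sum_(j < e.+1) coefz (N1, D1) (e - j) * coefz (N2, D2) j =
  coefz (N1 * N2, D1 * D2) e.
Proof.
move=> h1 h2; set M := e.+1.
have h12 : (D1 * D2)`_0 != 0 by rewrite coef0M mulf_neq0.
have hinv : eqm M (D1 * D2 * (Dinv M D1 * Dinv M D2)) 1.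
  rewrite mulrACA -(mulr1 1).
  exact: (eqm_mul M _ _ _ _ (Dinv_spec M D1 h1) (Dinv_spec M D2 h2)).
rewrite (coefz_inv M _ _ _ e (leqnn M) h12 hinv).
rewrite mulrACA mulrC coefM; apply: eq_bigr => j _; rewrite mulrC.
by rewrite !(coefz_Dinv M) // ltnS leq_subr.
Qed.

Lemma fps_inv_scale c D D' : (forall i, D'`_i = c ^+ i * D`_i) ->
  forall j, fps_inv D' j = c ^+ j * fps_inv D j.
Proof.
move=> hD j; elim: j {-2}j (leqnn j) => [|j IH] k.
  by rewrite leqn0 => /eqP ->; rewrite /fps_inv /= hD expr0 !mul1r.
rewrite leq_eqVlt => /orP [/eqP -> | ]; last by apply: IH.
rewrite !fps_invS hD expr0 mul1r mulrCA; congr (_ * _).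
rewrite mulr_sumr !big_nat; apply: eq_bigr => i /andP [i1 i2].
rewrite hD IH; last by rewrite leq_subLR -addn1 addnC leq_add2r.
rewrite mulrACA -exprD subnKC //; exact: ltnW.
Qed.

Lemma coefz_scale c N D N' D' e : (forall i, D'`_i = c ^+ i * D`_i) ->
  (forall i, N'`_i = c ^+ i * N`_i) ->
  coefz (N', D') e = c ^+ e * coefz (N, D) e.
Proof.
move=> hD hN; rewrite /coefz mulr_sumr; apply: eq_bigr => i _ /=.
rewrite hN (fps_inv_scale c D D' hD) mulrACA -exprD subnKC //.
by rewrite -ltnS.
Qed.
Variable q : F.

Definition P (x : F) (m : nat) : {poly F} := \prod_(j < m) (1 - (x * q ^+ j) *: 'X).

Lemma PS x m : P x m.+1 = P x m * (1 - (x * q ^+ m) *: 'X).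
Proof. by rewrite /P big_ord_recr. Qed.

Lemma coefP x m i : (P x m)`_i = (-x) ^+ i * q ^+ 'C(i, 2) * qb q m i.
Proof.
elim: m i => [|m IH] i.
  rewrite /P big_ord0 coef1; case: i => [|i] /=; first by rewrite !expr0 !mul1r.
  by rewrite mulr0.
rewrite PS mulrBr mulr1 -scalerAr coefB coefZ coefMX.
case: i => [|j] /=; first by rewrite mulr0 subr0 IH !expr0 !mul1r qb_n0.
rewrite !IH.
case: (leqP j m) => hj.
  have -> : q ^+ m = q ^+ j * q ^+ (m - j) by rewrite -exprD subnKC.
  rewrite (binS j 1) bin1 exprD exprS; ring.
rewrite (qb_small q m j) // (qb_small q m j.+1) ?mulr0 ?subr0 ?addr0 ?mulr0 //.
exact: ltnW.
Qed.

Lemma P0 x m : (P x m)`_0 = 1.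
Proof. by rewrite coefP !expr0 !mul1r qb_n0. Qed.

Lemma P0_neq0 x m : (P x m)`_0 != 0.
Proof. by rewrite P0 oner_eq0. Qed.

Lemma P_scale x c m i : (P (x * c) m)`_i = c ^+ i * (P x m)`_i.
Proof. by rewrite !coefP -mulNr exprMn; ring. Qed.

Lemma P_split x k m : P x (k + m) = P x k * P (x * q ^+ k) m.
Proof.
rewrite /P big_split_ord /=; congr (_ * _); apply: eq_bigr => j _.
by rewrite exprD mulrA.
Qed.

Definition Hs (x : F) (L M : nat) : {poly F} := \poly_(j < M) (x ^+ j * qb q (L + j).-1 j).

Lemma Pinv x L M : eqm M (P x L * Hs x L M) 1.
Proof.
elim: L => [|L IH].
  move=> m hm; rewrite /P big_ord0 mul1r coef_poly hm coef1.
  case: m hm => [|m] hm /=; first by rewrite mul1r.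
  by rewrite qb_small ?mulr0.
have h : eqm M ((1 - (x * q ^+ L) *: 'X) * Hs x L.+1 M) (Hs x L M).
  move=> m hm; rewrite mulrBl mul1r -scalerAl coefB coefZ coefXM !coef_poly hm.
  case: m hm => [|m] hm /=; first by rewrite mulr0 subr0 !qb_n0.
  rewrite (ltnW hm) addnS [qb q (L + m).+1 _]/= addnK exprS; ring.
rewrite PS -mulrA.
apply: (eqm_trans _ _ (P x L * Hs x L M)) => //.
exact: (eqm_mul M _ _ _ _ (eqm_refl M _) h).
Qed.

Lemma fps_inv_P x L j : fps_inv (P x L) j = x ^+ j * qb q (L + j).-1 j.
Proof.
have hj : (j < j.+1)%N by [].
have := inv_unique j.+1 (P x L) _ _ (Dinv_spec j.+1 (P x L) (P0_neq0 x L)) (Pinv x L j.+1) j hj.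
by rewrite !coef_poly hj.
Qed.

Lemma key_lemma (a b : F) (r : nat) :
  coefz (P b r, P a r.+1) r.+1 = a * coefz (P b r.+1, P a r.+2) r.
Proof.
rewrite /coefz /= big_ord_recr /= coefP (qb_small q r r.+1) // mulr0 mul0r addr0.
rewrite mulr_sumr; apply: eq_bigr => -[i hi] _ /=.
rewrite !coefP !fps_inv_P.
have hir : (i <= r)%N by rewrite -ltnS.
set y := (r - i)%N.
have hr : r = (i + y)%N by rewrite subnKC.
have -> : (r.+1 - i)%N = y.+1 by rewrite subSn.
have -> : (r.+1 + y.+1).-1 = (i + y + y).+1 by rewrite hr; lia.
have -> : (r.+2 + y).-1 = (i + y + y).+1 by rewrite hr; lia.
rewrite hr.
have := qb_tri _ q i y.
move=> ht.
transitivity ((-b) ^+ i * q ^+ 'C(i, 2) * a ^+ y.+1 * (qb q (i + y) i * qb q (i + y + y).+1 y.+1)).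
  ring.
rewrite ht exprS; ring.
Qed.

Lemma EG (a b : F) (r k e : nat) : (k <= r)%N ->
  \sum_(k <= i < (k + e).+1) coefz (P b r, P a r.+1) (k + e - i) * Amat a b q i k =
  q ^+ (k * e) * coefz (P b (r - k), P a (r - k).+1) e.
Proof.
move=> hkr.
rewrite -{1}[k]add0n big_addn -addnS addKn big_mkord.
transitivity (\sum_(i < e.+1) coefz (P b r, P a r.+1) (e - i) * coefz (P a k, P b k) i).
  apply: eq_bigr => i _; rewrite /Amat leq_addl /rdiv /= addnK mulr1 mul1r.
  by rewrite [(i + k)%N]addnC subnDl.
rewrite coefz_mul ?P0_neq0 //.
rewrite (coefz_ratio (P b r * P a k) (P a r.+1 * P b k) (P (b * q ^+ k) (r - k)) (P (a * q ^+ k) (r - k).+1)) ?P0_neq0 //.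
  by rewrite exprM; apply: coefz_scale => i; rewrite P_scale.
  by rewrite coef0M !P0 mulr1 oner_eq0.
have e1 : P b r = P b k * P (b * q ^+ k) (r - k) by rewrite -P_split subnKC.
have e2 : P a r.+1 = P a k * P (a * q ^+ k) (r - k).+1 by rewrite -P_split addnS subnKC.
rewrite e1 e2; ring.
Qed.

Lemma sumW (f : nat -> F) a b a' b' : (a' <= a)%N -> (b <= b')%N ->
  \sum_(a <= i < b) f i =
  \sum_(a' <= i < b') (if (a <= i)%N && (i < b)%N then f i else 0).
Proof.
move=> h1 h2.
rewrite (big_nat_widen _ _ _ _ _ h2) (big_nat_widenl _ _ _ _ _ h1) big_mkcond.
by apply: eq_bigr => i _; rewrite /= andbC.
Qed.

Lemma tri_exchange (G : nat -> nat -> F) k n :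
  \sum_(k <= l < n.+1) \sum_(l <= i < n.+1) G l i =
  \sum_(k <= i < n.+1) \sum_(k <= l < i.+1) G l i.
Proof.
transitivity (\sum_(k <= l < n.+1) \sum_(k <= i < n.+1)
   (if (l <= i)%N && (i < n.+1)%N then G l i else 0)).
  by apply: eq_big_nat => l /andP [hkl _]; apply: sumW.
rewrite exchange_big_nat; apply: eq_big_nat => i /andP [_ hi].
rewrite (sumW _ k i.+1 k n.+1) //; apply: eq_big_nat => l /andP [hkl hl].
by rewrite hi hkl andbT ltnS.
Qed.

Lemma row_inv (A B : nat -> nat -> F)
  (hAB : forall n k, (k <= n)%N -> \sum_(k <= i < n.+1) A n i * B i k = (n == k)%:R)
  (y : nat -> F) k n : (k <= n)%N ->
  \sum_(k <= l < n.+1) (\sum_(l <= i < n.+1) y i * A i l) * B l k = y k.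
Proof.
move=> hkn.
under eq_bigr do rewrite mulr_suml.
rewrite tri_exchange.
transitivity (\sum_(k <= i < n.+1) y i * (i == k)%:R).
  apply: eq_big_nat => i /andP [hki _]; rewrite -hAB // mulr_sumr.
  by apply: eq_bigr => l _; rewrite mulrA.
rewrite big_ltn ?ltnS // eqxx mulr1 big1_seq ?addr0 //.
move=> i /andP [_]; rewrite mem_index_iota => /andP [hi _].
by rewrite (gtn_eqF hi) mulr0.
Qed.

Lemma rev_reindex (h : nat -> F) l m :
  \sum_(l <= i < m.+1) h i = \sum_(t < m.+1 - l) h (m - t)%N.
Proof. by rewrite big_rev_mkord. Qed.

Lemma shift_reindex (g : nat -> F) (N : nat) :
  \sum_(1 <= j < N.+1) g j = \sum_(t < N) g t.+1.
Proof.
rewrite -{1}[1%N]add0n big_addn subn1 /= big_mkord.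
by apply: eq_bigr => i _; rewrite addn1.
Qed.

Section Final.
Variables (a b : F) (B : nat -> nat -> F).
Hypothesis hAB : forall n k, (k <= n)%N ->
  \sum_(k <= i < n.+1) Amat a b q n i * B i k = (n == k)%:R.

Definition dd (t : nat) := coefz (P b t, P a t.+1) t.

Lemma hG (i l : nat) : (l <= i)%N ->
  \sum_(l <= j < i.+1) coefz (P b i, P a i.+1) (i - j) * Amat a b q j l =
  q ^+ (l * (i - l)) * dd (i - l).
Proof.
move=> hl; have := EG a b i l (i - l) hl.
by rewrite subnKC.
Qed.

Lemma hbeta (N : nat) : coefz (P b N.+1, P a N.+2) N =
  \sum_(t < N.+1) q ^+ (t.+1 * (N - t)) * dd (N - t) * B t.+1 1%N.
Proof.
have := row_inv (Amat a b q) B hAB (fun j => coefz (P b N.+1, P a N.+2) (N.+1 - j)) 1 N.+1 isT.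
rewrite subn1 /= => <-.
rewrite shift_reindex; apply: eq_bigr => t _.
by rewrite hG // subSS.
Qed.

Lemma hDrow (i k : nat) : (k <= i)%N ->
  coefz (P b i, P a i.+1) (i - k) =
  \sum_(k <= l < i.+1) q ^+ (l * (i - l)) * dd (i - l) * B l k.
Proof.
move=> hki.
have := row_inv (Amat a b q) B hAB (fun j => coefz (P b i, P a i.+1) (i - j)) k i hki.
move=> <-; apply: eq_big_nat => l /andP [hkl hl].
by rewrite hG // -ltnS.
Qed.

Lemma E_eq (m l : nat) : (l <= m)%N ->
  \sum_(l <= i < m.+2) coefz (P b m, P a m.+1) (m.+1 - i) * Amat a b q i l =
  a * \sum_(l <= i < m.+1) B (m.+1 - i)%N 1%N * q ^+ ((m.+1 - i) * i) *
        (q ^+ (l * (i - l)) * dd (i - l)).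
Proof.
move=> hlm.
have := EG a b m l (m.+1 - l) hlm.
rewrite subnKC; last exact: leqW.
move=> ->.
rewrite subSn // key_lemma hbeta rev_reindex subSn //.
rewrite mulrCA mulr_sumr; congr (a * _).
apply: eq_bigr => -[t ht] _ /=.
have htu : (t <= m - l)%N by rewrite -ltnS.
set u := (m - l)%N in htu *.
have hm : m = (l + u)%N by rewrite /u subnKC.
set v := (u - t)%N.
have hu : u = (t + v)%N by rewrite /v subnKC.
rewrite hm hu.
have -> : ((l + (t + v)).+1 - (l + (t + v) - t))%N = t.+1 by lia.
have -> : (l + (t + v) - t - l)%N = v by lia.
have -> : (l + (t + v) - t)%N = (l + v)%N by lia.
have e : (l * (t + v).+1 + t.+1 * v = t.+1 * (l + v) + l * v)%N by nia.
transitivity (q ^+ (l * (t + v).+1 + t.+1 * v) * dd v * B t.+1 1%N).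
  by rewrite exprD; ring.
by rewrite e exprD; ring.
Qed.

Lemma coefz0 N D : coefz (N, D) 0 = N`_0 * (D`_0)^-1.
Proof. by rewrite /coefz big_ord1. Qed.

Lemma Amat_eq i k : (k <= i)%N -> Amat a b q i k = coefz (P a k, P b k) (i - k).
Proof. by move=> h; rewrite /Amat h /rdiv /= mulr1 mul1r. Qed.

Lemma hDq (i j : nat) : coefz (rdiv (qpoch b q i) (qpoch a q i.+1)) j = coefz (P b i, P a i.+1) j.
Proof. by rewrite /rdiv /= mulr1 mul1r. Qed.

Lemma main_gen (n k : nat) : (k <= n)%N ->
  B n k =
      coefz (rdiv (qpoch b q (n%:Z - 1)) (qpoch a q n)) (n - k)
      - a * \sum_(k <= i < n)
              B (n - i)%N 1%N * q ^+ ((n - i) * i)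
              * coefz (rdiv (qpoch b q i) (qpoch a q i.+1)) (i - k).
Proof.
case: n => [|m] hkn.
  move: hkn; rewrite leqn0 => /eqP ->.
  rewrite big_geq // mulr0 subr0.
  have h00 := hAB 0 0 (leqnn 0); rewrite big_nat1 in h00.
  rewrite Amat_eq // coefz0 !P0 invr1 mulr1 mul1r in h00.
  rewrite h00 eqxx.
  have -> : (0%:Z - 1 = Negz 0)%R by [].
  rewrite /rdiv /= coefz0 big_ord1 big_ord0 !mulr1 coefB !coef1 coefZ coefX /=.
  by rewrite mulr0 subr0 invr1 mulr1.
have -> : ((m.+1)%:Z - 1 = m%:Z)%R by rewrite -addn1 PoszD addrK.
under eq_bigr do rewrite hDq.
rewrite hDq.
have hA := row_inv (Amat a b q) B hAB (fun i => coefz (P b m, P a m.+1) (m.+1 - i)) k m.+1 hkn.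
cbv beta in hA; rewrite -hA; clear hA.
have hS : \sum_(k <= i < m.+1) B (m.+1 - i)%N 1%N * q ^+ ((m.+1 - i) * i) *
              coefz (P b i, P a i.+1) (i - k) =
  \sum_(k <= l < m.+1) (\sum_(l <= i < m.+1) B (m.+1 - i)%N 1%N * q ^+ ((m.+1 - i) * i) *
        (q ^+ (l * (i - l)) * dd (i - l))) * B l k.
  transitivity (\sum_(k <= i < m.+1) \sum_(k <= l < i.+1)
     B (m.+1 - i)%N 1%N * q ^+ ((m.+1 - i) * i) * (q ^+ (l * (i - l)) * dd (i - l) * B l k)).
    apply: eq_big_nat => i /andP [hki _]; rewrite hDrow // mulr_sumr.
    done.
  rewrite -tri_exchange; apply: eq_big_nat => l _; rewrite mulr_suml.
  by apply: eq_bigr => i _; rewrite mulrA.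
rewrite hS big_nat_recr //=.
rewrite big_nat1 Amat_eq // subnn coefz0 !P0 invr1 mulr1 mul1r coefz0 !P0 invr1 mulr1 mul1r.
have hsum : \sum_(k <= l < m.+1)
     (\sum_(l <= i < m.+2) coefz (P b m, P a m.+1) (m.+1 - i) * Amat a b q i l) * B l k =
  a * \sum_(k <= l < m.+1) (\sum_(l <= i < m.+1) B (m.+1 - i)%N 1%N * q ^+ ((m.+1 - i) * i) *
        (q ^+ (l * (i - l)) * dd (i - l))) * B l k.
  rewrite mulr_sumr; apply: eq_big_nat => l /andP [_ hl].
  by rewrite E_eq // mulrA.
rewrite hsum; ring.
Qed.
End Final.
End Ser.


Theorem theorem2p1 (R : realType) (a b q : R[i]) (hq : q != 0)
  (B : nat -> nat -> R[i]) (hB : lower_tri_inverse (Amat a b q) B) :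
  forall n k : nat, (k <= n)%N ->
    B n k =
      coefz (rdiv (qpoch b q (n%:Z - 1)) (qpoch a q n)) (n - k)
      - a * \sum_(k <= i < n)
              B (n - i)%N 1%N * q ^+ ((n - i) * i)
              * coefz (rdiv (qpoch b q i) (qpoch a q i.+1)) (i - k).
Proof.
move=> n k hkn; apply: main_gen => // n' k' h.
exact: (proj2 hB n' k' h).1.
Qed.
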